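(* Let $(V,F)$ be a near vector space with $(F,\circ)$ commutative. Then $(V,F)$ is regular if and only if for any $u\in Q(V)\setminus\{0\}$, $V$ is a vector space over the field $(F,+_u,\circ)$ (with scalar multiplication given by the action of $F$ on $V$); in the regular case all the operations $+_u$, $u\in Q(V)\setminus\{0\}$, coincide.
   Context: An F-group is a pair $(V,F)$ where $(V,+)$ is a group and $F$ is a set of endomorphisms of $V$ such that: the maps $0,1,-1$ lie in $F$; $F\setminus\{0\}$ is a subgroup of $\mathrm{Aut}(V,+)$ under composition; and if $\alpha x=\beta x$ with $\alpha,\beta\in F$, $x\in V$ then $\alpha=\beta$ or $x=0$. The quasi-kernel $Q(V)$ is the set of $u\in V$ such that for all $\alpha,\beta\in F$ there is $\gamma\in F$ with $\alpha u+\beta u=\gamma u$. $(V,F)$ is a near vector space if $Q(V)$ generates $(V,+)$. Commutativity means $\alpha(\beta v)=\beta(\alpha v)$ for all $\alpha,\beta\in F$, $v\in V$. For $u\in Q(V)\setminus\{0\}$, $\alpha+_u\beta$ denotes the unique $\gamma$ with $\alpha u+\beta u=\gamma u$; when $F$ is commutative, $(F,+_u,\circ)$ is a field. Elements $u,v\in Q(V)$ are compatible if there is $\lambda\in F\setminus\{0\}$ with $u+\lambda v\in Q(V)$; $V$ is regular if all elements of $Q(V)\setminus\{0\}$ are pairwise compatible. *)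

(* Defs.v *)
From Stdlib Require Import Classical FunctionalExtensionality.
Set Implicit Arguments.

Section NVS.
Variable V : Type.
Variables (add : V -> V -> V) (zero : V) (neg : V -> V).
Variable F : (V -> V) -> Prop.

Definition is_group : Prop :=
  (forall x y z, add x (add y z) = add (add x y) z) /\
  (forall x, add zero x = x) /\ (forall x, add x zero = x) /\
  (forall x, add (neg x) x = zero) /\ (forall x, add x (neg x) = zero).

Definition is_endo (a : V -> V) : Prop := forall x y, a (add x y) = add (a x) (a y).

Definition zero_map : V -> V := fun _ => zero.
Definition id_map : V -> V := fun x => x.
Definition neg_map : V -> V := fun x => neg x.

Definition is_Fgroup : Prop :=
  is_group /\
  (forall a, F a -> is_endo a) /\
  F zero_map /\ F id_map /\ F neg_map /\
  (forall a, F a -> a <> zero_map ->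
     exists b, F b /\ b <> zero_map /\ (forall x, b (a x) = x) /\ (forall x, a (b x) = x)) /\
  (forall a b, F a -> a <> zero_map -> F b -> b <> zero_map ->
     F (fun x => a (b x)) /\ (fun x => a (b x)) <> zero_map) /\
  (forall a b x, F a -> F b -> a x = b x -> a = b \/ x = zero).

Definition inQ (u : V) : Prop :=
  forall a b, F a -> F b -> exists c, F c /\ add (a u) (b u) = c u.

Inductive genQ : V -> Prop :=
  | genQ_base u : inQ u -> genQ u
  | genQ_zero : genQ zero
  | genQ_neg x : genQ x -> genQ (neg x)
  | genQ_add x y : genQ x -> genQ y -> genQ (add x y).

Definition near_vector_space : Prop := is_Fgroup /\ (forall x, genQ x).

Definition F_commutative : Prop :=
  forall a b, F a -> F b -> forall v, a (b v) = b (a v).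

(* plus_u u a b c  <->  c = a +_u b, i.e. c in F and a u + b u = c u. *)
Definition plus_u (u : V) (a b c : V -> V) : Prop := F c /\ add (a u) (b u) = c u.

Definition compatible (u v : V) : Prop :=
  exists l, F l /\ l <> zero_map /\ inQ (add u (l v)).

Definition regular : Prop :=
  forall u v, inQ u -> u <> zero -> inQ v -> v <> zero -> compatible u v.

Definition vector_space_over (u : V) : Prop :=
  (forall x y, add x y = add y x) /\
  (forall a x y, F a -> a (add x y) = add (a x) (a y)) /\
  (forall a b c, F a -> F b -> plus_u u a b c -> forall x, c x = add (a x) (b x)) /\
  (forall a b x, F a -> F b -> (fun y => a (b y)) x = a (b x)) /\
  (forall x, id_map x = x).

Definition plus_ops_coincide : Prop :=
  forall u v, inQ u -> u <> zero -> inQ v -> v <> zero ->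
  forall a b c, F a -> F b -> (plus_u u a b c <-> plus_u v a b c).

End NVS.

(* Main.v *)
Require Import Defs.
From Stdlib Require Import Classical FunctionalExtensionality.

Lemma g_cancel_l {V : Type} {add : V -> V -> V} {zero : V} {neg : V -> V} :
  is_group add zero neg -> forall z x y, add z x = add z y -> x = y.
Proof.
  intros [A [L [R [IL IR]]]] z x y H.
  rewrite <- (L x), <- (L y), <- (IL z), <- !A, H. reflexivity.
Qed.

Lemma g_neg_unique {V : Type} {add : V -> V -> V} {zero : V} {neg : V -> V} :
  is_group add zero neg -> forall x y, add x y = zero -> y = neg x.
Proof.
  intros G x y H. apply (g_cancel_l G x). destruct G as [A [L [R [IL IR]]]].
  rewrite H, IR. reflexivity.
Qed.

Lemma g_eq {V : Type} {add : V -> V -> V} {zero : V} {neg : V -> V} :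
  is_group add zero neg -> forall p q, add p (neg q) = zero -> p = q.
Proof.
  intros [A [L [R [IL IR]]]] p q H.
  rewrite <- (R p), <- (IL q), A, H, L. reflexivity.
Qed.

Lemma g_neg_neg {V : Type} {add : V -> V -> V} {zero : V} {neg : V -> V} :
  is_group add zero neg -> forall x, neg (neg x) = x.
Proof.
  intros G x. symmetry. apply (g_neg_unique G). destruct G as [A [L [R [IL IR]]]]. apply IL.
Qed.

Lemma g_neg_add {V : Type} {add : V -> V -> V} {zero : V} {neg : V -> V} :
  is_group add zero neg -> forall x y, neg (add x y) = add (neg y) (neg x).
Proof.
  intros G x y. symmetry. apply (g_neg_unique G). destruct G as [A [L [R [IL IR]]]].
  rewrite A, <- (A x y), IR, R, IR. reflexivity.
Qed.

Lemma g_endo_zero {V : Type} {add : V -> V -> V} {zero : V} {neg : V -> V} {a : V -> V} :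
  is_group add zero neg -> is_endo add a -> a zero = zero.
Proof.
  intros G E. apply (g_cancel_l G (a zero)). rewrite <- E.
  destruct G as [A [L [R [IL IR]]]]. rewrite !R. reflexivity.
Qed.

Lemma g_endo_neg {V : Type} {add : V -> V -> V} {zero : V} {neg : V -> V} {a : V -> V} :
  is_group add zero neg -> is_endo add a -> forall x, a (neg x) = neg (a x).
Proof.
  intros G E x. apply (g_neg_unique G). rewrite <- E.
  pose proof G as [A [L [R [IL IR]]]]. rewrite IR. apply (g_endo_zero G E).
Qed.

Theorem mainTheorem3 (V : Type) (add : V -> V -> V) (zero : V) (neg : V -> V)
  (F : (V -> V) -> Prop) :
  near_vector_space add zero neg F ->
  F_commutative F ->
  (regular add zero F <->
     (forall u, inQ add F u -> u <> zero -> vector_space_over add F u)) /\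
  (regular add zero F -> plus_ops_coincide add zero F).
Proof.
  intros [[G [Hend [F0 [F1 [Fn [Finv [Fcomp Hfpf]]]]]]] Hgen] Hcomm.
  pose proof G as [A [L [R [IL IR]]]].
  assert (Comm : forall x y, add x y = add y x).
  { intros x y. rewrite <- (g_neg_neg G x) at 1. rewrite <- (g_neg_neg G y) at 1.
    rewrite <- (Hend (neg_map neg) Fn). unfold neg_map. rewrite (g_neg_add G), !(g_neg_neg G).
    reflexivity. }
  assert (Swap : forall p q r s, add (add p q) (add r s) = add (add p r) (add q s)).
  { intros p q r s. rewrite <- !A. f_equal. rewrite !A. f_equal. apply Comm. }
  assert (NegAdd : forall x y, neg (add x y) = add (neg x) (neg y)).
  { intros. rewrite (g_neg_add G). apply Comm. }
  assert (Ez : forall a, F a -> a zero = zero).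
  { intros a Fa. exact (g_endo_zero G (Hend a Fa)). }
  assert (En : forall a x, F a -> a (neg x) = neg (a x)).
  { intros a x Fa. exact (g_endo_neg G (Hend a Fa) x). }
  assert (Fneg : forall a, F a -> F (fun x => neg (a x))).
  { intros a Fa. destruct (classic (a = zero_map zero)) as [Ha|Ha].
    - subst a. replace (fun x : V => neg (zero_map zero x)) with (zero_map zero); auto.
      apply functional_extensionality. intro x. unfold zero_map.
      symmetry. apply (Ez _ Fn).
    - destruct (classic (neg_map neg = zero_map zero)) as [Hn|Hn].
      + replace (fun x : V => neg (a x)) with (zero_map zero); auto.
        apply functional_extensionality. intro x.
        exact (eq_sym (equal_f Hn (a x))).
      + exact (proj1 (Fcomp _ _ Fn Hn Fa Ha)). }
  assert (LemQ : forall v a b, inQ add F v -> F a -> F b ->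
            exists c, F c /\ add (a v) (neg (b v)) = c v).
  { intros v a b Qv Fa Fb. exact (Qv a (fun x => neg (b x)) Fa (Fneg b Fb)). }
  assert (Inv0 : forall l x, F l -> l <> zero_map zero -> l x = zero -> x = zero).
  { intros l x Fl Hl Hx. destruct (Finv l Fl Hl) as [b [Fb [_ [Hb _]]]].
    rewrite <- (Hb x), Hx. apply Ez; auto. }
  assert (Key : regular add zero F -> forall u v a b c, inQ add F u -> u <> zero ->
            inQ add F v -> v <> zero -> F a -> F b -> F c ->
            add (a u) (b u) = c u -> add (a v) (b v) = c v).
  { intros Reg u v a b c Qu u0 Qv v0 Fa Fb Fc Hc.
    set (D := fun x => add (add (a x) (b x)) (neg (c x))).
    assert (D_eq : forall x, D x = zero -> add (a x) (b x) = c x).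
    { intros x H. exact (g_eq G _ _ H). }
    assert (D_add : forall x y, D (add x y) = add (D x) (D y)).
    { intros x y. unfold D. rewrite (Hend a Fa), (Hend b Fb), (Hend c Fc), NegAdd.
      rewrite (Swap (a x)). apply Swap. }
    assert (D_sc : forall m x, F m -> D (m x) = m (D x)).
    { intros m x Fm. unfold D. rewrite (Hend m Fm), (Hend m Fm), (En m _ Fm).
      rewrite (Hcomm a m Fa Fm), (Hcomm b m Fb Fm), (Hcomm c m Fc Fm). reflexivity. }
    assert (Du : D u = zero). { unfold D. rewrite Hc. apply IR. }
    cut (D v = zero). { apply D_eq. }
    destruct (Reg u v Qu u0 Qv v0) as [l [Fl [Hl0 Qw]]].
    set (w := add u (l v)) in *.
    destruct (Qw a b Fa Fb) as [e [Fe He]].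
    destruct (LemQ w e c Qw Fe Fc) as [s [Fs Hs]].
    assert (Dw : D w = s w). { unfold D. rewrite He. exact Hs. }
    assert (Dw2 : D w = l (D v)). { unfold w. rewrite D_add, Du, D_sc; auto. }
    destruct (classic (s = zero_map zero)) as [Hs0|Hs0].
    { apply (Inv0 l); auto. rewrite <- Dw2, Dw, Hs0. reflexivity. }
    destruct (Qv a b Fa Fb) as [e' [Fe' He']].
    destruct (LemQ v e' c Qv Fe' Fc) as [r [Fr Hr]].
    assert (Dv : D v = r v). { unfold D. rewrite He'. exact Hr. }
    destruct (LemQ v r s Qv Fr Fs) as [t [Ft Ht]].
    assert (Hsu : s u = l (t v)).
    { assert (E1 : add (s u) (l (s v)) = l (r v)).
      { rewrite <- Dv, <- Dw2, Dw. unfold w. rewrite (Hend s Fs), (Hcomm s l Fs Fl).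
        reflexivity. }
      rewrite <- Ht, (Hend l Fl), (En l _ Fl), <- E1, <- A, IR, R. reflexivity. }
    destruct (Finv s Fs Hs0) as [s' [Fs' [Hs'0 [Hs' _]]]].
    assert (Hu : u = s' (l (t v))). { rewrite <- Hsu, Hs'. reflexivity. }
    destruct (classic (t = zero_map zero)) as [Ht0|Ht0].
    { exfalso. apply u0. rewrite Hu, Ht0. unfold zero_map. rewrite (Ez l Fl). apply Ez; auto. }
    destruct (Fcomp l t Fl Hl0 Ft Ht0) as [Flt Hlt].
    destruct (Fcomp s' _ Fs' Hs'0 Flt Hlt) as [Fmu Hmu].
    apply (Inv0 _ _ Fmu Hmu). simpl.
    rewrite <- (D_sc (fun x => s' (l (t x))) v Fmu). simpl. rewrite <- Hu. exact Du. }
  split.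
  - split.
    + intros Reg u Qu u0. repeat split.
      * exact Comm.
      * intros a x y Fa. apply (Hend a Fa).
      * intros a b c Fa Fb [Fc Hc] x.
        assert (HQ : forall y, inQ add F y -> add (a y) (b y) = c y).
        { intros y Qy. destruct (classic (y = zero)) as [->|y0].
          - rewrite (Ez a Fa), (Ez b Fb), (Ez c Fc); apply L.
          - exact (Key Reg u y a b c Qu u0 Qy y0 Fa Fb Fc Hc). }
        symmetry. induction (Hgen x) as [y Qy| |y _ IH|y z _ IH1 _ IH2].
        -- apply HQ; auto.
        -- rewrite (Ez a Fa), (Ez b Fb), (Ez c Fc); apply L.
        -- rewrite (En c y Fc), (En a y Fa), (En b y Fb), <- IH; symmetry; apply NegAdd.
        -- rewrite !(Hend _ Fa), !(Hend _ Fb), !(Hend _ Fc), <- IH1, <- IH2. apply Swap.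
    + intros H u v Qu u0 Qv v0. exists (@id_map V). split; [exact F1|split].
      * intro Hid. apply u0. exact (equal_f Hid u).
      * intros a b Fa Fb. destruct (Qu a b Fa Fb) as [c [Fc Hc]].
        exists c. split; auto.
        destruct (H u Qu u0) as [_ [_ [Hp _]]].
        symmetry. apply (Hp a b c Fa Fb (conj Fc Hc)).
  - intros Reg u v Qu u0 Qv v0 a b c Fa Fb. unfold plus_u. split.
    + intros [Fc Hc]. split; auto. exact (Key Reg u v a b c Qu u0 Qv v0 Fa Fb Fc Hc).
    + intros [Fc Hc]. split; auto. exact (Key Reg v u a b c Qv v0 Qu u0 Fa Fb Fc Hc).
Qed.
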